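(* Let $F_0,F_1$ be an affine pair of communicating SR-machines, and for $j=0,1$ let $k_j=|K_j|$ be the number of states of $F_j$. If there is a reachable global state $((p_0,p_1),(x_\alpha,\lambda))$ with $|x_\alpha|\ge k_0(k_1-1)+1$, then $F_1$ has a receive cycle and $F_0$ has a send cycle.
   Context: A pair of communicating SR-machines is a CFSM protocol with communication graph having nodes $\{0,1\}$ and two edges $\alpha$ (from $0$ to $1$) and $\beta$ (from $1$ to $0$), disjoint finite message alphabets $M_\alpha,M_\beta$, and two finite state machines $F_j=(K_j,\Sigma_j,T_j,h_j)$, $j=0,1$, with $\Sigma_0=\{-b:b\in M_\alpha\}\cup\{+b:b\in M_\beta\}$, $\Sigma_1=\{-b:b\in M_\beta\}\cup\{+b:b\in M_\alpha\}$, $K_j$ finite, $h_j\in K_j$ initial, $T_j\subseteq K_j\times\Sigma_j\times K_j$ (transitions written $p\xrightarrow{e}q$; $+b$ = receive, $-b$ = send; $p\xrightarrow{w}q$ for $w\in\Sigma_j^*$ means a directed path labelled $w$). A state is a send state if it has no outgoing $+b$ transition and a receive state if it has no outgoing $-b$ transition. $F_j$ is an SR-machine if every state is a send or a receive state, its transition diagram is strongly connected, and $p\xrightarrow{e}q_1$, $p\xrightarrow{e}q_2$ imply $q_1=q_2$. Global states are $((p_0,p_1),(x_\alpha,x_\beta))$ with $p_j\in K_j$, $x_\alpha\in M_\alpha^*$, $x_\beta\in M_\beta^*$; initially $((h_0,h_1),(\lambda,\lambda))$. A step is either a send: a machine performs $p\xrightarrow{-b}q$ and $b$ is appended to the end of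 the channel on which it sends ($\alpha$ for $F_0$, $\beta$ for $F_1$), or a receive: a machine performs $p\xrightarrow{+b}q$ and $b$ is removed from the front of its input channel ($\beta$ for $F_0$, $\alpha$ for $F_1$), which must begin with $b$; the other machine's state is unchanged. Reachable means reachable from the initial global state by finitely many steps. For $w\in\Sigma_0^*\cup\Sigma_1^*$, $\pi_\alpha(w)\in M_\alpha^*$ (resp. $\pi_\beta(w)\in M_\beta^*$) is the string of message symbols from $M_\alpha$ (resp. $M_\beta$) occurring in $w$, in order, with signs removed. Let $\mathbf Z_j=\{(\pi_\alpha(w),\pi_\beta(w)): h_j\xrightarrow{w}h_j \text{ in } F_j\}$; the pair is affine if $\mathbf Z_0=\mathbf Z_1$. A send cycle (resp. receive cycle) of $F_j$ is a directed cycle in its transition diagram all of whose labels are of the form $-b$ (resp. $+b$). *)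

(* Defs.v *)
From mathcomp Require Import all_boot.
Set Implicit Arguments. Unset Strict Implicit. Unset Printing Implicit Defensive.

(* For F_0: S = M_alpha, R = M_beta.  For F_1: S = M_beta, R = M_alpha.
   Using two distinct types makes the alphabets disjoint by construction. *)
Inductive act (S R : Type) := Snd of S | Rcv of R.
Arguments Snd {S R}. Arguments Rcv {S R}.

Section Machine.
Variables (K : finType) (S R : Type) (T : K -> act S R -> K -> Prop).

Inductive walk : K -> seq (act S R) -> K -> Prop :=
| walk_nil p : walk p [::] p
| walk_cons p e q w r : T p e q -> walk q w r -> walk p (e :: w) r.

Definition send_state (p : K) : Prop := forall (r : R) q, ~ T p (Rcv r) q.
Definition recv_state (p : K) : Prop := forall (s : S) q, ~ T p (Snd s) q.

Definition SR_machine : Prop :=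
  [/\ forall p, send_state p \/ recv_state p,
      forall p q, exists w, walk p w q &
      forall p e q1 q2, T p e q1 -> T p e q2 -> q1 = q2].

Definition sends (w : seq (act S R)) : seq S :=
  pmap (fun e => if e is Snd s then Some s else None) w.
Definition recvs (w : seq (act S R)) : seq R :=
  pmap (fun e => if e is Rcv r then Some r else None) w.

Definition send_cycle : Prop :=
  exists (p : K) (w : seq S), w <> [::] /\ walk p (map Snd w) p.
Definition recv_cycle : Prop :=
  exists (p : K) (w : seq R), w <> [::] /\ walk p (map Rcv w) p.
End Machine.

Section Pair.
Variables (Ma Mb : finType) (K0 K1 : finType) (h0 : K0) (h1 : K1)
  (T0 : K0 -> act Ma Mb -> K0 -> Prop) (T1 : K1 -> act Mb Ma -> K1 -> Prop).

Definition Z0 (x : seq Ma) (y : seq Mb) : Prop :=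
  exists w, walk T0 h0 w h0 /\ sends w = x /\ recvs w = y.
Definition Z1 (x : seq Ma) (y : seq Mb) : Prop :=
  exists w, walk T1 h1 w h1 /\ recvs w = x /\ sends w = y.

Definition affine : Prop := forall x y, Z0 x y <-> Z1 x y.

Definition gstate : Type := ((K0 * K1) * (seq Ma * seq Mb))%type.

Inductive gstep : gstate -> gstate -> Prop :=
| step_send0 p0 q0 p1 a xa xb :
    T0 p0 (Snd a) q0 -> gstep ((p0, p1), (xa, xb)) ((q0, p1), (rcons xa a, xb))
| step_recv0 p0 q0 p1 b xa xb :
    T0 p0 (Rcv b) q0 -> gstep ((p0, p1), (xa, b :: xb)) ((q0, p1), (xa, xb))
| step_send1 p0 p1 q1 b xa xb :
    T1 p1 (Snd b) q1 -> gstep ((p0, p1), (xa, xb)) ((p0, q1), (xa, rcons xb b))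
| step_recv1 p0 p1 q1 a xa xb :
    T1 p1 (Rcv a) q1 -> gstep ((p0, p1), (a :: xa, xb)) ((p0, q1), (xa, xb)).

Inductive reachable : gstate -> Prop :=
| reach_init : reachable ((h0, h1), ([::], [::]))
| reach_step g g' : reachable g -> gstep g g' -> reachable g'.
End Pair.

(* Main.v *)
Require Import Defs.
From mathcomp Require Import all_boot.
From mathcomp Require Import zify.
From Stdlib Require Import Classical.

Set Implicit Arguments. Unset Strict Implicit. Unset Printing Implicit Defensive.

Section Gen.
Variables (K : finType) (S R : Type) (T : K -> act S R -> K -> Prop).

Lemma walk_cat p x r y q : walk T p x r -> walk T r y q -> walk T p (x ++ y) q.
Proof. elim=> //= p1 e q1 w r1 H _ IH Hy; econstructor; eauto. Qed.

Lemma walk_catP x : forall p y q, walk T p (x ++ y) q ->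
  exists r, walk T p x r /\ walk T r y q.
Proof.
elim: x => [|e x IH] p y q /=.
  by move=> H; exists p; split=> //; constructor.
move=> H; inversion H; subst.
have [r [H1 H2]] := IH _ _ _ H5.
by exists r; split=> //; econstructor; eauto.
Qed.

Lemma walk_rcons p w r e q : walk T p w r -> T r e q -> walk T p (rcons w e) q.
Proof.
move=> H1 H2; rewrite -cats1; apply: (walk_cat H1).
by econstructor; eauto; constructor.
Qed.

Definition isRcv (e : act S R) : bool := if e is Rcv _ then true else false.

Lemma size_recvs (w : seq (act S R)) : size (recvs w) = count isRcv w.
Proof. by elim: w => [|[s|r] w IH] //=; rewrite IH. Qed.
Lemma size_sends (w : seq (act S R)) : size (sends w) = count (predC isRcv) w.
Proof. by elim: w => [|[s|r] w IH] //=; rewrite IH. Qed.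

Lemma recvs_cat (x y : seq (act S R)) : recvs (x ++ y) = recvs x ++ recvs y.
Proof. by rewrite /recvs pmap_cat. Qed.
Lemma sends_cat (x y : seq (act S R)) : sends (x ++ y) = sends x ++ sends y.
Proof. by rewrite /sends pmap_cat. Qed.
Lemma recvs_rcons (x : seq (act S R)) e : recvs (rcons x e) = recvs x ++ recvs [:: e].
Proof. by rewrite -cats1 recvs_cat. Qed.
Lemma sends_rcons (x : seq (act S R)) e : sends (rcons x e) = sends x ++ sends [:: e].
Proof. by rewrite -cats1 sends_cat. Qed.

Lemma all_rcv (w : seq (act S R)) : all isRcv w -> w = map Rcv (recvs w).
Proof. by elim: w => [|[s|r] w IH] //= /IH <-. Qed.
Lemma all_snd (w : seq (act S R)) : all (predC isRcv) w -> w = map Snd (sends w).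
Proof. by elim: w => [|[s|r] w IH] //= /IH <-. Qed.

Lemma pig (A : {set K}) w : forall p q, walk T p w q ->
  (forall x y r, w = x ++ y -> walk T p x r -> walk T r y q -> r \in A) ->
  #|A| <= size w ->
  exists w1 w2 w3 r, [/\ w = w1 ++ w2 ++ w3, w2 <> [::],
     walk T p w1 r, walk T r w2 r & walk T r w3 q].
Proof.
elim: w A => [|e w IH] A p q Hw HA Hs.
  have pA : p \in A by apply: (HA [::] [::]) => //; constructor.
  by move: Hs; rewrite leqn0 => /eqP/cards0_eq Ae; rewrite Ae inE in pA.
inversion Hw; subst.
have pA : p \in A by apply: (HA [::] (e :: w)) => //; constructor.
case: (classic (exists x y, w = x ++ y /\ walk T q0 x p /\ walk T p y q)).
  move=> [x [y [E [Hx1 Hx2]]]].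
  exists [::], (e :: x), y, p; split=> //=; first by rewrite E.
  - by constructor.
  - by econstructor; eauto.
move=> Hn.
have [w1 [w2 [w3 [r [E1 E2 E3 E4 E5]]]]] : exists w1 w2 w3 r, [/\ w = w1 ++ w2 ++ w3, w2 <> [::],
     walk T q0 w1 r, walk T r w2 r & walk T r w3 q].
  apply: (IH (A :\ p)) => //.
    move=> x y r E G1 G2; rewrite !inE; apply/andP; split.
      apply/negP => /eqP Erp; subst r; apply: Hn; by exists x, y.
    apply: (HA (e :: x) y) => //; first by rewrite E.
    by econstructor; eauto.
  by rewrite (cardsD1 p A) pA /= in Hs.
exists (e :: w1), w2, w3, r; split=> //; first by rewrite E1.
by econstructor; eauto.
Qed.

Lemma pigT w p q : walk T p w q -> #|K| <= size w ->
  exists w1 w2 w3 r, [/\ w = w1 ++ w2 ++ w3, w2 <> [::],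
     walk T p w1 r, walk T r w2 r & walk T r w3 q].
Proof. move=> H Hs; apply: (pig (A := setT)) => //; by rewrite cardsT. Qed.

Lemma shorten n : forall w p q, size w <= n -> walk T p w q ->
  exists w', walk T p w' q /\ size w' < #|K|.
Proof.
elim: n => [|n IH] w p q Hs H.
  exists w; split=> //; move: Hs; rewrite leqn0 => /eqP ->.
  by apply/card_gt0P; exists p.
case: (ltnP (size w) #|K|) => Hk; first by exists w.
have [w1 [w2 [w3 [r [E1 E2 E3 E4 E5]]]]] := pigT H Hk.
apply: (IH (w1 ++ w3)); last exact: walk_cat E3 E5.
move: Hs; rewrite E1 !size_cat; case: w2 E2 {E4 E1} => //= ? ? _; lia.
Qed.

Lemma cyc (P : pred (act S R)) w p q : walk T p w q -> all P w -> #|K| <= size w ->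
  exists r w2, [/\ w2 <> [::], all P w2 & walk T r w2 r].
Proof.
move=> H Ha Hs; have [w1 [w2 [w3 [r [E1 E2 E3 E4 E5]]]]] := pigT H Hs.
exists r, w2; split=> //; move: Ha; rewrite E1 !all_cat; by case/and3P.
Qed.

End Gen.

Lemma decomp (A : Type) (P : pred A) w : exists b rest, [/\ w = b ++ rest, all P b &
  (rest = [::] \/ exists e rest', rest = e :: rest' /\ ~~ P e)].
Proof.
elim: w => [|e w [b [rest [E1 E2 E3]]]]; first by exists [::], [::]; split=> //; left.
case Pe: (P e).
  by exists (e :: b), rest; split=> //=; [rewrite E1 | rewrite Pe].
exists [::], (e :: w); split=> //; right; exists e, w; split=> //; by rewrite Pe.
Qed.

Lemma run (A : Type) (P : pred A) k n : forall w, size w <= n ->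
  (count (predC P) w + 1) * (k - 1) < count P w ->
  exists a b c, [/\ w = a ++ b ++ c, all P b & k <= size b].
Proof.
elim: n => [|n IH] w Hs Hc.
  by move: Hs Hc; rewrite leqn0 => /eqP /size0nil ->.
have [b [rest [E1 E2 E3]]] := decomp P w.
case: (leqP k (size b)) => Hk; first by exists [::], b, rest.
have HP : count P b = size b by apply/eqP; rewrite -all_count.
have HnP : count (predC P) b = 0.
  by have := count_predC P b; rewrite HP; lia.
case: E3 => [Er | [e [rest' [Er Pe]]]].
  move: Hc; rewrite E1 Er cats0 HP HnP add0n mul1n; lia.
move: Hc Hs; rewrite E1 Er !count_cat HP HnP /= (negbTE Pe) /= => Hc Hs.
have [a [b' [c [F1 F2 F3]]]] : exists a b c, [/\ rest' = a ++ b ++ c, all P b & k <= size b].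
  apply: IH; first by move: Hs; rewrite size_cat /=; lia.
  move: Hc; set m := count (predC P) rest'; set z := k - 1.
  rewrite !add0n. rewrite -/z.
  have -> : (1 + m + 1) * z = (m + 1) * z + z by rewrite !mulnDl mul1n; lia.
  lia.
exists (b ++ e :: a), b', c; split=> //; by rewrite F1 -catA.
Qed.

Lemma prefix (K : finType) (S R : Type) (T : K -> act S R -> K -> Prop) :
  SR_machine T -> forall u p r, walk T p u r -> forall w q x y,
  walk T p w q -> sends w = sends u ++ y -> recvs w = recvs u ++ x ->
  exists w', w = u ++ w' /\ walk T r w' q.
Proof.
case=> Hsr _ Hdet u p r Hu; elim: Hu => [p0|p0 e q0 u0 r0 He Hu0 IH] w q x y Hw Hs Hr.
  by exists w.
inversion Hw as [p1 Ep1 Ew Eq|p1 e2 q1 w1 r1 He2 Hw1 Ep1 Ew Eq]; subst; clear Hw.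
  by case: e He Hs Hr => [s|rr] _ /= Hs Hr; congruence.
have Ee : e2 = e /\ sends w1 = sends u0 ++ y /\ recvs w1 = recvs u0 ++ x.
  case: (Hsr p0) => Hst.
    case: e He Hs Hr => [s|rr] He; last by case: (Hst rr q0).
    case: e2 He2 => [s2|rr2] He2; last by case: (Hst rr2 q1).
    by move=> /= [-> ->] ->.
  case: e He Hs Hr => [s|rr] He; first by case: (Hst s q0).
  case: e2 He2 => [s2|rr2] He2; first by case: (Hst s2 q1).
  by move=> /= -> [-> ->].
case: Ee => Ee [Hs1 Hr1]; subst e2.
have Eq : q1 = q0 by apply: Hdet He2 He.
subst q1.
have [w' [E1 E2]] := IH _ _ _ _ Hw1 Hs1 Hr1.
by exists w'; rewrite E1.
Qed.

Lemma reach_inv (Ma Mb K0 K1 : finType) (h0 : K0) (h1 : K1)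
  (T0 : K0 -> act Ma Mb -> K0 -> Prop) (T1 : K1 -> act Mb Ma -> K1 -> Prop) g :
  reachable h0 h1 T0 T1 g ->
  exists u0 u1, [/\ walk T0 h0 u0 g.1.1, walk T1 h1 u1 g.1.2,
    sends u0 = recvs u1 ++ g.2.1 & sends u1 = recvs u0 ++ g.2.2].
Proof.
elim=> [|ga gb _ [u0 [u1 [H0 H1 E0 E1]]] Hst].
  by exists [::], [::]; split=> //; constructor.
case: Hst H0 H1 E0 E1 => /=.
- move=> p0 q0 p1 a xa xb HT H0 H1 E0 E1.
  exists (rcons u0 (Snd a)), u1; split=> //.
  + exact: walk_rcons H0 HT.
  + by rewrite sends_rcons E0 /= -catA cats1.
  + by rewrite recvs_rcons cats0.
- move=> p0 q0 p1 b xa xb HT H0 H1 E0 E1.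
  exists (rcons u0 (Rcv b)), u1; split=> //.
  + exact: walk_rcons H0 HT.
  + by rewrite sends_rcons cats0.
  + by rewrite recvs_rcons E1 /= -catA.
- move=> p0 p1 q1 b xa xb HT H0 H1 E0 E1.
  exists u0, (rcons u1 (Snd b)); split=> //.
  + exact: walk_rcons H1 HT.
  + by rewrite recvs_rcons cats0.
  + by rewrite sends_rcons E1 /= -catA cats1.
- move=> p0 p1 q1 a xa xb HT H0 H1 E0 E1.
  exists u0, (rcons u1 (Rcv a)); split=> //.
  + exact: walk_rcons H1 HT.
  + by rewrite recvs_rcons E0 /= -catA.
  + by rewrite sends_rcons cats0.
Qed.

Lemma sends_mapR (S R : Type) (w : seq R) : sends (map (@Rcv S R) w) = [::].
Proof. by elim: w. Qed.
Lemma recvs_mapR (S R : Type) (w : seq R) : recvs (map (@Rcv S R) w) = w.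
Proof. by elim: w => //= r w ->. Qed.

Theorem lemma6p2 (Ma Mb K0 K1 : finType) (h0 : K0) (h1 : K1)
  (T0 : K0 -> act Ma Mb -> K0 -> Prop) (T1 : K1 -> act Mb Ma -> K1 -> Prop) :
  SR_machine T0 -> SR_machine T1 -> affine h0 h1 T0 T1 ->
  forall (p0 : K0) (p1 : K1) (xa : seq Ma),
    reachable h0 h1 T0 T1 ((p0, p1), (xa, [::])) ->
    #|K0| * (#|K1| - 1) + 1 <= size xa ->
    recv_cycle T1 /\ send_cycle T0.
Proof.
move=> SR0 SR1 Haff p0 p1 xa Hreach Hsize.
have [u0 [u1 [H0 H1 E0 E1]]] := reach_inv Hreach.
rewrite /= cats0 in E1; rewrite /= in H0 H1 E0.
have Hk0 : 0 < #|K0| by apply/card_gt0P; exists h0.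
have Hrc : recv_cycle T1.
  have SR0' := SR0; case: SR0' => _ Hconn0 _.
  have [v0' Hv0'] := Hconn0 p0 h0.
  have [v0 [Hv0 Hsv0]] := shorten (n := size v0') (leqnn _) Hv0'.
  have Hz0 : Z0 h0 T0 (sends (u0 ++ v0)) (recvs (u0 ++ v0)).
    by exists (u0 ++ v0); split=> //; exact: walk_cat H0 Hv0.
  have [w1 [Hw1 [Er Es]]] := (Haff _ _).1 Hz0.
  have [r1 [Ew1 Hr1]] := prefix SR1 H1 Hw1 (x := xa ++ sends v0) (y := recvs v0)
    ltac:(by rewrite Es recvs_cat E1) ltac:(by rewrite Er sends_cat E0 catA).
  have Hs1 : size (recvs r1) = size xa + size (sends v0).
    move: Er; rewrite Ew1 recvs_cat sends_cat E0 => /(f_equal size).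
    rewrite !size_cat; lia.
  have Hs2 : size (sends r1) = size (recvs v0).
    move: Es; rewrite Ew1 recvs_cat sends_cat E1 => /(f_equal size).
    rewrite !size_cat; lia.
  have Hrv : size (recvs v0) <= size v0 by rewrite size_recvs count_size.
  have Hcnt : (count (predC (@isRcv Mb Ma)) r1 + 1) * (#|K1| - 1) < count (@isRcv Mb Ma) r1.
    rewrite -size_recvs -size_sends Hs1 Hs2.
    have : (size (recvs v0) + 1) * (#|K1| - 1) <= #|K0| * (#|K1| - 1).
      by rewrite leq_mul2r; apply/orP; right; lia.
    lia.
  have [a [b [c [Er1 Hb Hkb]]]] := run (n := size r1) (leqnn _) Hcnt.
  rewrite Er1 in Hr1.
  have [q1 [_ Hbc]] := walk_catP Hr1.
  have [q2 [Hb' _]] := walk_catP Hbc.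
  have [r [w2 [Hne Hall Hw2]]] := cyc Hb' Hb Hkb.
  exists r, (recvs w2); split; last by rewrite -all_rcv.
  by move=> E; apply: Hne; rewrite (all_rcv Hall) E.
split=> //.
case: Hrc => q [w [Hne Hw]].
have SR1' := SR1; case: SR1' => _ Hconn1 _.
have [a Ha] := Hconn1 h1 q.
have [b Hb] := Hconn1 q h1.
set n := (size (sends a ++ sends b) + 1) * #|K0|.
have [c [Hc [Sc Rc]]] : exists c, [/\ walk T1 q c q, sends c = [::] & n <= size (recvs c)].
  elim: n => [|n [c [Hc Sc Rc]]]; first by exists [::]; split=> //; constructor.
  exists (map Rcv w ++ c); split.
  - exact: walk_cat Hw Hc.
  - by rewrite sends_cat sends_mapR Sc.
  - rewrite recvs_cat recvs_mapR size_cat; case: w Hne {Hw} => //= ? ? _; lia.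
have Hz1 : Z1 h1 T1 (recvs (a ++ c ++ b)) (sends (a ++ c ++ b)).
  exists (a ++ c ++ b); split=> //; apply: walk_cat Ha _; exact: walk_cat Hc Hb.
have [z [Hz [Es Er]]] := (Haff _ _).2 Hz1.
have Hsz : n <= size (sends z) by rewrite Es !recvs_cat !size_cat; lia.
have Hrz : size (recvs z) = size (sends a ++ sends b).
  by rewrite Er !sends_cat Sc.
have Hcnt : (count (predC (predC (@isRcv Ma Mb))) z + 1) * (#|K0| - 1)
            < count (predC (@isRcv Ma Mb)) z.
  have -> : count (predC (predC (@isRcv Ma Mb))) z = count (@isRcv Ma Mb) z.
    by apply: eq_count => e /=; rewrite negbK.
  rewrite -size_recvs -size_sends Hrz.
  move: Hsz; rewrite /n; set m := size (sends a ++ sends b); nia.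
have [a' [b' [c' [Ez Hb' Hkb]]]] := run (n := size z) (leqnn _) Hcnt.
rewrite Ez in Hz.
have [q1 [_ Hbc]] := walk_catP Hz.
have [q2 [Hb'' _]] := walk_catP Hbc.
have [r [w2 [Hne2 Hall Hw2]]] := cyc Hb'' Hb' Hkb.
exists r, (sends w2); split; last by rewrite -all_snd.
by move=> E; apply: Hne2; rewrite (all_snd Hall) E.
Qed.
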